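(* Let $n \in \mathbb N$ and let $F\colon\mathbb R_+^n\to \mathbb R_+$ be an amenable function. If there exist constants $a, c \in \mathbb{R}$ with $0<a\leqslant c$ such that $F(\mathbf x)\in[a,c]$ for every $\mathbf x\in\mathbb R_+^n\setminus\{(0,\dots,0)\}$, then $F$ is $(n)$-b-metric preserving with constant $K = \max\{1, \frac{c}{2a}\}$; that is, for every collection of b-metric spaces $(X_i,d_i)$, $i=1,\dots,n$, the function $D(\mathbf x,\mathbf y)=F(d_1(x_1,y_1),\dots,d_n(x_n,y_n))$ on $\prod_{i=1}^nX_i$ is a b-metric satisfying $D(\mathbf x,\mathbf y)\leqslant K(D(\mathbf x,\mathbf z)+D(\mathbf z,\mathbf y))$ for all $\mathbf x,\mathbf y,\mathbf z$.
   Context: $\mathbb R_+=[0,\infty)$. $F$ is amenable if $F(\mathbf x)=0\iff\mathbf x=(0,\dots,0)$. A b-metric on $X$ is $d\colon X^2\to\mathbb R_+$ with $d(x,y)=0\iff x=y$, $d(x,y)=d(y,x)$, and for some $K\geqslant1$, $d(x,z)\leqslant K(d(x,y)+d(y,z))$ for all $x,y,z$ (the relaxation constants of the spaces $(X_i,d_i)$ are arbitrary). *)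

(* Defs.v *)
From mathcomp Require Import all_boot all_order all_algebra.
From mathcomp Require Import reals.
Set Implicit Arguments. Unset Strict Implicit. Unset Printing Implicit Defensive.
Import Order.TTheory GRing.Theory Num.Theory.
Local Open Scope ring_scope.

Definition nonneg_vec {R : realType} {n : nat} (x : 'I_n -> R) : Prop :=
  forall i, 0 <= x i.

Definition zero_vec {R : realType} {n : nat} (x : 'I_n -> R) : Prop :=
  forall i, x i = 0.

(* F : R_+^n -> R_+ (only values on R_+^n matter) *)
Definition maps_into_Rplus {R : realType} {n : nat} (F : ('I_n -> R) -> R) : Prop :=
  forall x, nonneg_vec x -> 0 <= F x.

Definition amenable {R : realType} {n : nat} (F : ('I_n -> R) -> R) : Prop :=
  forall x, nonneg_vec x -> (F x = 0 <-> zero_vec x).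

Definition bmetric_with {R : realType} {T : Type} (d : T -> T -> R) (K : R) : Prop :=
  [/\ 1 <= K,
      (forall x y, 0 <= d x y),
      (forall x y, d x y = 0 <-> x = y),
      (forall x y, d x y = d y x)
    & (forall x y z, d x z <= K * (d x y + d y z))].

Definition is_bmetric {R : realType} {T : Type} (d : T -> T -> R) : Prop :=
  exists K : R, bmetric_with d K.

Definition prod_dist {R : realType} {n : nat} (F : ('I_n -> R) -> R)
  (X : 'I_n -> Type) (d : forall i, X i -> X i -> R)
  (x y : forall i, X i) : R :=
  F (fun i => d i (x i) (y i)).

(* Main.v *)
Require Import Defs.
From mathcomp Require Import all_boot all_order all_algebra.
From mathcomp Require Import reals.
From mathcomp Require Import boolp.
Import Order.TTheory GRing.Theory Num.Theory.
Local Open Scope ring_scope.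

Theorem proposition3p2 (R : realType) (n : nat) (F : ('I_n -> R) -> R) (a c : R) :
  maps_into_Rplus F -> amenable F ->
  0 < a -> a <= c ->
  (forall x, nonneg_vec x -> ~ zero_vec x -> a <= F x <= c) ->
  forall (X : 'I_n -> Type) (d : forall i, X i -> X i -> R),
    (forall i, is_bmetric (d i)) ->
    bmetric_with (prod_dist F d) (Num.max 1 (c / (2 * a))).
Proof.
move=> Fp Fam a0 ac Fb X d hb.
have hd : forall i, (forall x y, 0 <= d i x y) /\ (forall x y, d i x y = 0 <-> x = y)
   /\ (forall x y, d i x y = d i y x).
  by move=> i; case: (hb i) => K [_ h1 h2 h3 _].
have nn : forall u v, nonneg_vec (fun i => d i (u i) (v i)).
  by move=> u v i; case: (hd i) => h _; exact: h.
have Dz : forall u v, prod_dist F d u v = 0 <-> u = v.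
  move=> u v; split.
    move=> /(Fam _ (nn u v)) hz; apply: functional_extensionality_dep => i.
    by case: (hd i) => _ [h _]; apply/h; exact: hz.
  move=> <-; apply/(Fam _ (nn u u)) => i.
  by case: (hd i) => _ [h _]; apply/h.
have D0 : forall u v, 0 <= prod_dist F d u v by move=> u v; exact: Fp.
have Dc : forall u v, prod_dist F d u v <= c.
  move=> u v; case: (pselect (u = v)) => [<-|neq].
    by rewrite (proj2 (Dz u u) erefl); apply: le_trans ac; exact: ltW.
  have : ~ zero_vec (fun i => d i (u i) (v i)).
    by move=> hz; apply: neq; apply/Dz; apply/(Fam _ (nn u v)).
  by move=> /(Fb _ (nn u v)) /andP[].
have Da : forall u v, u <> v -> a <= prod_dist F d u v.
  move=> u v neq.
  have : ~ zero_vec (fun i => d i (u i) (v i)).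
    by move=> hz; apply: neq; apply/Dz; apply/(Fam _ (nn u v)).
  by move=> /(Fb _ (nn u v)) /andP[].
set K := Num.max 1 (c / (2 * a)).
have K1 : 1 <= K by rewrite le_max lexx.
have K2 : c <= K * (2 * a).
  have : c / (2 * a) <= K by rewrite le_max lexx orbT.
  rewrite ler_pdivrMr //; by rewrite mulr_gt0.
split => //.
- move=> u v; rewrite /prod_dist; congr F; apply: functional_extensionality_dep => i.
  by case: (hd i) => _ [_ h]; exact: h.
move=> x y z.
case: (pselect (x = y)) => [<-|nxy].
  rewrite (proj2 (Dz x x) erefl).
  by rewrite add0r; apply: ler_peMl.
case: (pselect (y = z)) => [<-|nyz].
  rewrite (proj2 (Dz y y) erefl) addr0.
  by apply: ler_peMl.
apply: (le_trans (Dc x z)); apply: (le_trans K2).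
apply: ler_wpM2l; first by apply: le_trans K1.
by rewrite mulr2n mulrDl mul1r; apply: lerD; apply: Da.
Qed.
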